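(* Let $G$ be a very well-covered graph with $2h$ vertices and let $e\in E(G)$. If the ideal $(I(G)^2:e)$ is squarefree, then the graph $G'$ whose edge ideal is $(I(G)^2:e)$ is very well-covered.
   Context: $I(G)=(uv\mid\{u,v\}\in E(G))\subseteq K[V(G)]$ is the edge ideal; the edge $e=\{a,b\}$ is identified with the monomial $ab$. The ideal $(I(G)^2:e)$ is generated by quadratic monomials; when it is squarefree it is the edge ideal of a graph $G'$ on the vertex set $V(G)$. $G$ is very well-covered if it has no isolated vertices, all minimal vertex covers have the same size, and this size is $|V(G)|/2$. *)

(* Defs.v *)
From HB Require Import structures.
From mathcomp Require Import all_boot all_order all_algebra.
From mathcomp Require Import mpoly.
Set Implicit Arguments. Unset Strict Implicit. Unset Printing Implicit Defensive.
Import GRing.Theory.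
Local Open Scope ring_scope.

Definition simple_graph n (G : rel 'I_n) :=
  irreflexive G /\ ssrbool.symmetric G.

Definition ideal_gen (P : comNzRingType) (S : P -> Prop) (f : P) : Prop :=
  exists (k : nat) (c g : 'I_k -> P),
    (forall i, S (g i)) /\ f = \sum_(i < k) c i * g i.

Section EdgeIdeal.
Variables (K : fieldType) (n : nat).
Local Notation P := {mpoly K[n]}.

Definition edge_mon (u v : 'I_n) : P := 'X_u * 'X_v.

Definition edge_gens (G : rel 'I_n) (f : P) : Prop :=
  exists u v, G u v /\ f = edge_mon u v.

Definition edge_ideal (G : rel 'I_n) : P -> Prop := ideal_gen (edge_gens G).

Definition edge_ideal_sq (G : rel 'I_n) : P -> Prop :=
  ideal_gen (fun f => exists g1 g2, edge_gens G g1 /\ edge_gens G g2 /\ f = g1 * g2).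

Definition colon (J : P -> Prop) (m : P) (f : P) : Prop := J (f * m).

Definition sqfree_monomial (f : P) : Prop :=
  exists m : 'X_{1..n}, (forall i, (m i <= 1)%N) /\ f = 'X_[m].

Definition squarefree_ideal (J : P -> Prop) : Prop :=
  exists S : P -> Prop, (forall f, S f -> sqfree_monomial f) /\
    (forall f, J f <-> ideal_gen S f).

(* The graph G' on V(G) whose edges are the squarefree quadratic monomials
   x_u x_v (u <> v) of (I(G)^2 : e); when (I(G)^2 : e) is squarefree, it is
   the edge ideal I(G'). *)
Definition colon_graph (G : rel 'I_n) (a b : 'I_n) : 'I_n -> 'I_n -> Prop :=
  fun u v => u <> v /\ colon (edge_ideal_sq G) (edge_mon a b) (edge_mon u v).

End EdgeIdeal.

Definition vertex_cover n (E : 'I_n -> 'I_n -> Prop) (C : {set 'I_n}) : Prop :=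
  forall u v, E u v -> u \in C \/ v \in C.

Definition minimal_vertex_cover n (E : 'I_n -> 'I_n -> Prop) (C : {set 'I_n}) : Prop :=
  vertex_cover E C /\ (forall D : {set 'I_n}, D \proper C -> ~ vertex_cover E D).

Definition very_well_covered n (E : 'I_n -> 'I_n -> Prop) : Prop :=
  (forall v : 'I_n, exists u, E v u) /\
  (forall C : {set 'I_n}, minimal_vertex_cover E C -> (2 * #|C| = n)%N).

(* Main.v *)
Require Import Defs.
From HB Require Import structures.
From mathcomp Require Import all_boot all_order all_algebra.
From mathcomp Require Import mpoly.
From mathcomp Require Import zify.
From Stdlib Require Import Classical_Prop.
Set Implicit Arguments. Unset Strict Implicit. Unset Printing Implicit Defensive.
Import GRing.Theory.
Local Open Scope ring_scope.

Lemma ideal_mon_div (K : fieldType) n (Sg : {mpoly K[n]} -> Prop) (m : 'X_{1..n}) :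
  (forall f, Sg f -> exists m', f = 'X_[m'] /\ ~~ (m' <= m)%MM) ->
  ~ ideal_gen Sg 'X_[m].
Proof.
move=> HS [k [c [g [Hg E]]]].
have : ('X_[m] : {mpoly K[n]})@_m = 0.
  rewrite E raddf_sum /= big1 // => i _.
  have [m' [-> Hm']] := HS _ (Hg i).
  apply/eqP; apply: contraNT Hm'; rewrite -mcoeff_msupp.
  rewrite (perm_mem (msuppMX _ _)) => /mapP [x _ ->].
  exact: lem_addr.
by rewrite mcoeffX eqxx => /eqP; rewrite oner_eq0.
Qed.

Lemma mdeg_le n (m1 m2 : 'X_{1..n}) : (m1 <= m2)%MM -> (mdeg m1 <= mdeg m2)%N.
Proof.
move=> H; rewrite -(submK H) mdegD; exact: leq_addl.
Qed.

Lemma mnm_eq_le n (m1 m2 : 'X_{1..n}) : (m1 <= m2)%MM -> mdeg m1 = mdeg m2 -> m1 = m2.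
Proof.
move=> H Hd; have E := submK H.
move: (congr1 (@mdeg n) E); rewrite mdegD Hd -{2}[mdeg m2]add0n => /addIn /eqP.
rewrite mdeg_eq0 => /eqP Z; by rewrite -E Z add0m.
Qed.

Fixpoint msum n (s : seq 'I_n) : 'X_{1..n} :=
  match s with [::] => 0%MM | x :: s' => (U_(x) + msum s')%MM end.

Lemma msumE n (s : seq 'I_n) x : msum s x = count_mem x s.
Proof. by elim: s => [|y s IH] /=; rewrite ?mnm0E // mnmDE mnm1E IH. Qed.

Lemma msum_perm n (s1 s2 : seq 'I_n) : msum s1 = msum s2 -> perm_eq s1 s2.
Proof.
move=> E; apply/allP => x _ /=; by rewrite -!msumE E.
Qed.

Lemma stepG (T : eqType) (x y : T) s t1 t2 :
  perm_eq (x :: s) (t1 ++ y :: t2) -> x = y -> perm_eq s (t1 ++ t2).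
Proof.
move=> H E; subst; rewrite -(perm_cons y); apply: perm_trans H _.
by apply/permPl; exact: (perm_catCA t1 [:: y] t2).
Qed.

Lemma peel4 (T : eqType) (x u v a b : T) s : perm_eq (x :: s) [:: u; v; a; b] ->
  [\/ x = u /\ perm_eq s [:: v; a; b], x = v /\ perm_eq s [:: u; a; b],
      x = a /\ perm_eq s [:: u; v; b] | x = b /\ perm_eq s [:: u; v; a]].
Proof.
move=> P; have : x \in [:: u; v; a; b] by rewrite -(perm_mem P) mem_head.
rewrite !inE => /or4P [] /eqP E.
- by constructor 1; split=> //; exact: (stepG (t1 := [::]) P E).
- by constructor 2; split=> //; exact: (stepG (t1 := [:: u]) P E).
- by constructor 3; split=> //; exact: (stepG (t1 := [:: u; v]) P E).
- by constructor 4; split=> //; exact: (stepG (t1 := [:: u; v; a]) P E).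
Qed.

Lemma peel3 (T : eqType) (x u v a : T) s : perm_eq (x :: s) [:: u; v; a] ->
  [\/ x = u /\ perm_eq s [:: v; a], x = v /\ perm_eq s [:: u; a]
    | x = a /\ perm_eq s [:: u; v]].
Proof.
move=> P; have : x \in [:: u; v; a] by rewrite -(perm_mem P) mem_head.
rewrite !inE => /or3P [] /eqP E.
- by constructor 1; split=> //; exact: (stepG (t1 := [::]) P E).
- by constructor 2; split=> //; exact: (stepG (t1 := [:: u]) P E).
- by constructor 3; split=> //; exact: (stepG (t1 := [:: u; v]) P E).
Qed.

Lemma peel2 (T : eqType) (x u v : T) s : perm_eq (x :: s) [:: u; v] ->
  (x = u /\ perm_eq s [:: v]) \/ (x = v /\ perm_eq s [:: u]).
Proof.
move=> P; have : x \in [:: u; v] by rewrite -(perm_mem P) mem_head.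
rewrite !inE => /orP [] /eqP E.
- by left; split=> //; exact: (stepG (t1 := [::]) P E).
- by right; split=> //; exact: (stepG (t1 := [:: u]) P E).
Qed.

Lemma peel1 (T : eqType) (x u : T) : perm_eq [:: x] [:: u] -> x = u.
Proof.
move=> P; have : x \in [:: u] by rewrite -(perm_mem P) mem_head.
by rewrite inE => /eqP.
Qed.

Lemma pair4 n (G : rel 'I_n) (p q r s u v a b : 'I_n) :
  ssrbool.symmetric G -> G p q -> G r s ->
  msum [:: p; q; r; s] = msum [:: u; v; a; b] ->
  G u v || (G u a && G v b) || (G u b && G v a).
Proof.
move=> Gs Hpq Hrs /msum_perm P.
have Hqp : G q p by rewrite Gs. have Hsr : G s r by rewrite Gs.
case/peel4: P => [[? P]|[? P]|[? P]|[? P]];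
case/peel3: P => [[? P]|[? P]|[? P]];
case/peel2: P => [[? /peel1 ?]|[? /peel1 ?]]; subst;
by rewrite ?Hpq ?Hqp ?Hrs ?Hsr ?orbT ?andbT.
Qed.
Lemma mdeg_msum n (s : seq 'I_n) : mdeg (msum s) = size s.
Proof. by elim: s => [|x s IH] /=; rewrite ?mdeg0 // mdegD mdeg1 IH. Qed.

Lemma edge_monE (K : fieldType) n (u v : 'I_n) : edge_mon K u v = 'X_[msum [:: u; v]].
Proof. by rewrite /edge_mon /= addm0 mpolyXD. Qed.

Lemma edge_mon2E (K : fieldType) n (p q r s : 'I_n) :
  edge_mon K p q * edge_mon K r s = 'X_[msum [:: p; q; r; s]].
Proof. by rewrite /edge_mon /= addm0 !mpolyXD !mulrA. Qed.

Lemma gens_sq_mon (K : fieldType) n (G : rel 'I_n) (f : {mpoly K[n]}) :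
  (exists g1 g2, edge_gens G g1 /\ edge_gens G g2 /\ f = g1 * g2) ->
  exists p q r s, G p q /\ G r s /\ f = 'X_[msum [:: p; q; r; s]].
Proof.
move=> [g1 [g2 [[p [q [Hpq ->]]] [[r [s [Hrs ->]]] ->]]]].
by exists p, q, r, s; rewrite edge_mon2E.
Qed.

Lemma ideal_gen1 (P : comNzRingType) (S : P -> Prop) f : S f -> ideal_gen S f.
Proof.
move=> Sf; exists 1%N, (fun _ => 1), (fun _ => f); split=> //.
by rewrite big_ord1 mul1r.
Qed.

Lemma colon_char (K : fieldType) n (G : rel 'I_n) (a b u v : 'I_n) :
  ssrbool.symmetric G ->
  colon (edge_ideal_sq G) (edge_mon K a b) (edge_mon K u v) ->
  G u v || (G u a && G v b) || (G u b && G v a).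
Proof.
move=> Gs; rewrite /colon /edge_ideal_sq edge_mon2E => H.
apply/negPn/negP => Hn; apply: (ideal_mon_div _ H) => f /gens_sq_mon.
move=> [p [q [r [s [Hpq [Hrs ->]]]]]]; exists (msum [:: p; q; r; s]); split=> //.
apply/negP => Hle; move/negP: Hn; apply; apply: (pair4 Gs Hpq Hrs).
by apply: mnm_eq_le Hle _; rewrite !mdeg_msum.
Qed.

Lemma colon_intro (K : fieldType) n (G : rel 'I_n) (a b u v : 'I_n) :
  G a b -> G u v || (G u a && G v b) || (G u b && G v a) ->
  colon (edge_ideal_sq G) (edge_mon K a b) (edge_mon K u v).
Proof.
move=> Gab /orP [/orP [Guv | /andP [Gua Gvb]] | /andP [Gub Gva]];
  rewrite /colon /edge_ideal_sq; apply: ideal_gen1.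
- exists (edge_mon K u v), (edge_mon K a b); split; first by exists u, v.
  by split=> //; exists a, b.
- exists (edge_mon K u a), (edge_mon K v b); split; first by exists u, a.
  split; first by exists v, b.
  by rewrite /edge_mon mulrACA.
- exists (edge_mon K u b), (edge_mon K v a); split; first by exists u, b.
  split; first by exists v, a.
  by rewrite /edge_mon [X in _ * X]mulrC mulrACA.
Qed.

Lemma no_triangle (K : fieldType) n (G : rel 'I_n) (a b w : 'I_n) :
  squarefree_ideal (colon (edge_ideal_sq (K := K) G) (edge_mon K a b)) ->
  G w a -> G w b -> False.
Proof.
move=> [S [HSf HJ]] Hwa Hwb.
have J2 : colon (edge_ideal_sq G) (edge_mon K a b) 'X_[msum [:: w; w]].
  rewrite /colon -edge_monE edge_mon2E -edge_mon2E; apply: ideal_gen1.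
  exists (edge_mon K w a), (edge_mon K w b); split; first by exists w, a.
  by split; [exists w, b|rewrite /edge_mon mulrACA].
move/HJ: J2; apply: ideal_mon_div => f Sf.
have [m' [Hsq Ef]] := HSf f Sf; subst f.
exists m'; split=> //; apply/negP => Hle.
have Jm : colon (edge_ideal_sq G) (edge_mon K a b) 'X_[m'].
  by apply/HJ; apply: ideal_gen1.
have degm : (mdeg m' <= 1)%N.
  rewrite -(mdeg1 w); apply: mdeg_le; apply/mnm_lepP => i.
  move/mnm_lepP: Hle => /(_ i); rewrite /= addm0 mnmDE mnm1E.
  have := Hsq i; case: (w == i) => //= ? ?; lia.
move: Jm; rewrite /colon edge_monE -mpolyXD; apply: ideal_mon_div.
move=> f /gens_sq_mon [p [q [r [s [_ [_ ->]]]]]]; exists (msum [:: p; q; r; s]).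
split=> //; apply/negP => /mdeg_le; rewrite mdegD !mdeg_msum /=; lia.
Qed.

Theorem theorem3p6 (K : fieldType) (h : nat) (G : rel 'I_(2 * h)) (a b : 'I_(2 * h)) :
  simple_graph G ->
  very_well_covered (fun u v => G u v) ->
  G a b ->
  squarefree_ideal (colon (edge_ideal_sq (K := K) G) (edge_mon K a b)) ->
  very_well_covered (colon_graph K G a b).
Proof.
move=> [Girr Gs] [Hiso Hcov] Gab Hsq.
have E1 : forall u v, G u v -> colon_graph K G a b u v.
  move=> u v Huv; rewrite /colon_graph; split; first by move=> E; subst; rewrite Girr in Huv.
  by apply: colon_intro => //; rewrite Huv.
have E2 : forall u v, colon_graph K G a b u v ->
    G u v || (G u a && G v b) || (G u b && G v a).
  move=> u v; rewrite /colon_graph => -[_ H]; exact: (colon_char Gs H).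
have Ntri : forall w, G w a -> G w b -> False.
  by move=> w; apply: no_triangle Hsq.
have Ecross : forall s t, G s a -> G t b -> colon_graph K G a b s t.
  move=> s t Hs Ht; rewrite /colon_graph; split; first by move=> E; subst; exact: Ntri Hs Ht.
  by apply: colon_intro => //; rewrite Hs Ht orbT.
split.
  by move=> v; have [u Hu] := Hiso v; exists u; exact: E1.
move=> C [CcovG' Cmin]; apply: Hcov; split.
  by move=> u v /E1 /CcovG'.
have Key : forall y, y = a \/ y = b -> y \in C -> exists t, t \notin C /\ G t y.
  move=> y Hy yC; apply: NNPP => Hno.
  apply: (Cmin _ (properD1 yC)) => p q Hpq.
  rewrite !in_setD1.
  have [Epy|Npy] := eqVneq p y.
    subst p; case: (boolP (q \in C)) => qC.
      by right; rewrite andbT; apply/eqP => E; subst; move: Hpq; rewrite /colon_graph => -[].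
    exfalso; apply: Hno; exists q; split=> //.
    have := E2 _ _ Hpq; case: Hy => ->; rewrite ?Girr ?Gab /= ?andbF ?andbT ?orbF.
      by rewrite (Gs a q) orbb.
    by rewrite (Gs b a) Gab /= (Gs b q) orbb.
  have [Eqy|Nqy] := eqVneq q y.
    subst q; case: (boolP (p \in C)) => pC.
      by left.
    exfalso; apply: Hno; exists p; split=> //.
    have := E2 _ _ Hpq; case: Hy => ->; rewrite ?Girr ?Gab /= ?andbF ?andbT ?orbF.
      by rewrite orbb.
    by rewrite (Gs b a) Gab andbT orbb.
  by case: (CcovG' _ _ Hpq) => H; [left|right]; rewrite H.
have notab : a \in C -> b \in C -> False.
  move=> aC bC.
  have [ta [taC Hta]] := Key a (or_introl erefl) aC.
  have [tb [tbC Htb]] := Key b (or_intror erefl) bC.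
  by case: (CcovG' _ _ (Ecross _ _ Hta Htb)) => H; [move: taC|move: tbC]; rewrite H.
move=> D HD HcovD; apply: (Cmin D HD) => u v Huv.
have Dsub := proper_sub HD.
case: (boolP (u \in D)) => uD; first by left.
case: (boolP (v \in D)) => vD; first by right.
exfalso.
have inD : forall x y, G x y -> x \notin D -> y \in D.
  by move=> x y Hxy xD; case: (HcovD _ _ Hxy) => // H; rewrite H in xD.
case/orP: (E2 _ _ Huv) => [/orP [Guv | /andP [Gua Gvb]] | /andP [Gub Gva]].
- by move: vD; rewrite (inD _ _ Guv uD).
- by apply: notab; apply: (subsetP Dsub); [exact: inD Gua uD|exact: inD Gvb vD].
- by apply: notab; apply: (subsetP Dsub); [exact: inD Gva vD|exact: inD Gub uD].
Qed.
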